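(* Let $d\ge 2$ and let $\mathcal{M}^d$ be the set of all maskable observables on $\mathbb{C}^d$, i.e. Hermitian $d\times d$ matrices $\mathcal{O}$ for which there exists some quantum channel $\mathcal{E}$ with $\mathcal{E}^*(\mathcal{O})=\mathbb{I}$. Then there is no single quantum channel $\mathcal{E}$ on $d\times d$ matrices such that $\mathcal{E}^*(\mathcal{O})=\mathbb{I}$ for all $\mathcal{O}\in\mathcal{M}^d$.
   Context: A quantum channel $\mathcal{E}$ is a linear completely positive trace-preserving map on $d\times d$ complex matrices, $\mathcal{E}(\rho)=\sum_i E_i\rho E_i^\dagger$ with $\sum_i E_i^\dagger E_i=\mathbb{I}$; its adjoint is $\mathcal{E}^*(X)=\sum_i E_i^\dagger X E_i$, so that $\operatorname{Tr}(\mathcal{E}(\rho)X)=\operatorname{Tr}(\rho\,\mathcal{E}^*(X))$. *)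

(* Defs.v *)
From HB Require Import structures.
From mathcomp Require Import all_boot all_order all_algebra.
From mathcomp Require Import complex.
From mathcomp Require Export reals.
Set Implicit Arguments. Unset Strict Implicit. Unset Printing Implicit Defensive.
Import Order.TTheory GRing.Theory Num.Theory.
Local Open Scope ring_scope.

Definition dagger (C : numClosedFieldType) (d : nat) (A : 'M[C]_d) : 'M[C]_d :=
  (map_mx Num.conj A)^T.

Definition hermitian (C : numClosedFieldType) (d : nat) (A : 'M[C]_d) : Prop :=
  dagger A = A.

(* A quantum channel on d x d matrices given by a finite list of Kraus
   operators E_i with sum_i E_i^dagger E_i = I. *)
Definition is_kraus (C : numClosedFieldType) (d : nat) (Es : seq 'M[C]_d) : Prop :=
  \sum_(E <- Es) (dagger E *m E) = 1%:M.

Definition channel (C : numClosedFieldType) (d : nat) (Es : seq 'M[C]_d)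
  (rho : 'M[C]_d) : 'M[C]_d :=
  \sum_(E <- Es) (E *m rho *m dagger E).

Definition channel_adj (C : numClosedFieldType) (d : nat) (Es : seq 'M[C]_d)
  (X : 'M[C]_d) : 'M[C]_d :=
  \sum_(E <- Es) (dagger E *m X *m E).

Definition maskable (C : numClosedFieldType) (d : nat) (O : 'M[C]_d) : Prop :=
  hermitian O /\ exists Es : seq 'M[C]_d, is_kraus Es /\ channel_adj Es O = 1%:M.

(* Main.v *)
Require Import Defs.
From HB Require Import structures.
From mathcomp Require Import all_boot all_order all_algebra.
From mathcomp Require Import complex.
From mathcomp Require Import reals.
Import GRing.Theory Num.Theory.
Local Open Scope ring_scope.

Lemma dagger_delta (C : numClosedFieldType) d (j k : 'I_d) :
  dagger (delta_mx j k : 'M[C]_d) = delta_mx k j.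
Proof.
apply/matrixP => x y; rewrite /dagger !mxE.
by rewrite andbC; case: (_ && _); rewrite ?conjC1 ?conjC0.
Qed.

Lemma delta_sandwich (C : numClosedFieldType) d (j k : 'I_d) (O : 'M[C]_d) :
  delta_mx j k *m O *m delta_mx k j = O k k *: delta_mx j j.
Proof.
apply/matrixP => x y; rewrite !mxE.
rewrite (bigD1 k) //= big1 ?addr0; last first.
  by move=> l /negbTE nl; rewrite !mxE nl /= mulr0.
rewrite !mxE eqxx /=.
under eq_bigr do rewrite !mxE.
rewrite (bigD1 k) //= big1 ?addr0; last first.
  by move=> l /negbTE nl; rewrite nl andbF mul0r.
rewrite eqxx andbT.
by case: (x == j); case: (y == j); rewrite /= ?mul1r ?mulr1 ?mul0r ?mulr0.
Qed.

Lemma maskable_kk (C : numClosedFieldType) d (k : 'I_d) (O : 'M[C]_d) :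
  Defs.hermitian O -> O k k = 1 -> maskable O.
Proof.
move=> hO Okk; split; first exact: hO.
exists [seq delta_mx k j | j <- index_enum 'I_d]; split.
  rewrite /is_kraus big_map mx1_sum_delta; apply: eq_bigr => j _.
  by rewrite dagger_delta mul_delta_mx.
rewrite /channel_adj big_map mx1_sum_delta; apply: eq_bigr => j _.
by rewrite dagger_delta delta_sandwich Okk scale1r.
Qed.

Lemma adjD (C : numClosedFieldType) d (Es : seq 'M[C]_d) A B :
  channel_adj Es (A + B) = channel_adj Es A + channel_adj Es B.
Proof.
rewrite /channel_adj -big_split /=; apply: eq_bigr => E _.
by rewrite mulmxDr mulmxDl.
Qed.

Lemma herm_delta (C : numClosedFieldType) d (k : 'I_d) :
  Defs.hermitian (delta_mx k k : 'M[C]_d).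
Proof. by rewrite /Defs.hermitian dagger_delta. Qed.

Lemma herm_1delta (C : numClosedFieldType) d (k : 'I_d) :
  Defs.hermitian (1%:M - delta_mx k k : 'M[C]_d).
Proof.
rewrite /Defs.hermitian; apply/matrixP => x y; rewrite /dagger !mxE.
rewrite rmorphB /= !conjC_nat eq_sym; congr (_ - _).
by rewrite andbC.
Qed.

Arguments maskable_kk {C d k O}.
Arguments herm_delta {C d}.
Arguments herm_1delta {C d}.
Arguments adjD {C d}.

Theorem theorem5 (R : realType) (d : nat) (hd : (2 <= d)%N) :
  ~ exists Es : seq 'M[R[i]]_d,
      is_kraus Es /\
      forall O : 'M[R[i]]_d, maskable O -> channel_adj Es O = 1%:M.
Proof.
case=> Es [hK hE].
pose k0 : 'I_d := Ordinal (ltn_trans (ltnSn 0) hd).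
pose k1 : 'I_d := Ordinal hd.
have e0 : (delta_mx k0 k0 : 'M[R[i]]_d) k0 k0 = 1 by rewrite mxE !eqxx.
have H1 := hE _ (maskable_kk (herm_delta k0) e0).
have e1 : (1%:M - delta_mx k0 k0 : 'M[R[i]]_d) k1 k1 = 1.
  by rewrite !mxE eqxx /= subr0.
have H2 := hE _ (maskable_kk (herm_1delta k0) e1).
have H3 : channel_adj Es 1%:M = 1%:M.
  by rewrite /channel_adj -[RHS]hK; apply: eq_bigr => E _; rewrite mulmx1.
have := adjD Es (delta_mx k0 k0) (1%:M - delta_mx k0 k0).
rewrite addrC subrK H1 H2 H3 => /matrixP /(_ k0 k0).
rewrite !mxE eqxx /= => /eqP.
rewrite eq_sym -subr_eq0 addrK oner_eq0.
by [].
Qed.
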